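(* Let $\widehat{A} = A + \epsilon B$ with $A, B \in \mathbb{R}^{n\times n}$ and $Ind(\widehat{A}) = k$. Then a dual matrix $\widehat{X} = X + \epsilon R$ with $X,R\in\mathbb{R}^{n\times n}$ is a dual Drazin generalized inverse of $\widehat{A}$ if and only if $X = A^{D}$ and $$A^kA^DB+A^kRA+\Big(\sum_{i=0}^{k-1}A^{k-1-i}BA^{i}\Big)(A^DA-I)=0,$$ $$R=A^{D}AR+A^{D}BA^{D}+RAA^{D},$$ $$AR + BA^{D} = RA + A^DB.$$
   Context: A dual number is $a+\epsilon b$ with $a,b\in\mathbb{R}$, where the dual unit $\epsilon$ satisfies $\epsilon\neq 0$, $\epsilon^2=0$ and commutes with real numbers. A dual matrix is $\widehat{A}=A+\epsilon B$ with $A,B$ real matrices; sums and products are computed formally using $\epsilon^2=0$, e.g. $(A+\epsilon B)(C+\epsilon D)=AC+\epsilon(AD+BC)$, and two dual matrices are equal iff their real parts and their dual parts are equal. $\mathbb{D}^n$ denotes the set of dual column vectors of length $n$. For a square dual matrix $\widehat{A}$, $R(\widehat{A}^k)=\{\widehat{A}^k\widehat{z}:\widehat{z}\in\mathbb{D}^n\}$, and the dual index $Ind(\widehat{A})$ is the smallest nonnegative integer $k$ with $R(\widehat{A}^k)=R(\widehat{A}^{k+1})$. For a real square matrix $A$, $A^D$ denotes its Drazin inverse. For $Ind(\widehat{A})=k$, a dual matrix $\widehat{X}$ is a dual Drazin generalized inverse (DDGI) of $\widehat{A}$ if $\widehat{A}^{k}\widehat{X}\widehat{A} = \widehat{A}^{k}$,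 $\widehat{X}\widehat{A}\widehat{X} = \widehat{X}$ and $\widehat{A}\widehat{X} =\widehat{X}\widehat{A}$. *)

(* Defs.v *)
From HB Require Import structures.
From mathcomp Require Import all_boot all_order all_algebra.
From mathcomp Require Import reals.
Set Implicit Arguments. Unset Strict Implicit. Unset Printing Implicit Defensive.
Import Order.TTheory GRing.Theory Num.Theory.
Local Open Scope ring_scope.

Section Dual.
Variables (R : realType) (n : nat).

(* A dual matrix A + eps B is represented by the pair (A, B). *)
Definition dmat := ('M[R]_n * 'M[R]_n)%type.
(* A dual column vector z0 + eps z1 is the pair (z0, z1). *)
Definition dvec := ('cV[R]_n * 'cV[R]_n)%type.

(* (A + eps B)(C + eps D) = AC + eps (AD + BC) *)
Definition dmul (P Q : dmat) : dmat :=
  (P.1 *m Q.1, P.1 *m Q.2 + P.2 *m Q.1).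
Definition dmulv (P : dmat) (z : dvec) : dvec :=
  (P.1 *m z.1, P.1 *m z.2 + P.2 *m z.1).
Definition done : dmat := (1%:M, 0).
Definition dpow (P : dmat) (k : nat) : dmat := iter k (dmul P) done.

Definition drange_stable (P : dmat) (k : nat) : Prop :=
  forall y : dvec,
    (exists z : dvec, y = dmulv (dpow P k) z) <->
    (exists z : dvec, y = dmulv (dpow P k.+1) z).

Definition dual_index_is (P : dmat) (k : nat) : Prop :=
  drange_stable P k /\ forall j, (j < k)%N -> ~ drange_stable P j.

Definition is_DDGI (P : dmat) (k : nat) (Y : dmat) : Prop :=
  [/\ dmul (dmul (dpow P k) Y) P = dpow P k,
      dmul (dmul Y P) Y = Y &
      dmul P Y = dmul Y P].

Definition mpow (A : 'M[R]_n) (k : nat) : 'M[R]_n := iter k (mulmx A) 1%:M.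

Definition range_stable (A : 'M[R]_n) (m : nat) : Prop :=
  forall y : 'cV[R]_n,
    (exists z : 'cV[R]_n, y = mpow A m *m z) <->
    (exists z : 'cV[R]_n, y = mpow A m.+1 *m z).

Definition index_is (A : 'M[R]_n) (m : nat) : Prop :=
  range_stable A m /\ forall j, (j < m)%N -> ~ range_stable A j.

(* X is the Drazin inverse A^D of A:  A^(m+1) X = A^m, XAX = X, AX = XA
   with m = Ind(A).  (These equations determine A^D uniquely.) *)
Definition is_drazin (A X : 'M[R]_n) : Prop :=
  exists m, index_is A m /\
    [/\ mpow A m.+1 *m X = mpow A m, X *m A *m X = X & A *m X = X *m A].

End Dual.

(* Main.v *)
Require Import Defs.
From HB Require Import structures.
From mathcomp Require Import all_boot all_order all_algebra.
From mathcomp Require Import reals.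
From Stdlib Require Import Classical.
From mathcomp Require Import zify.
Import Order.TTheory GRing.Theory Num.Theory.
Local Open Scope ring_scope.

Set Implicit Arguments. Unset Strict Implicit.
Section Aux.
Variables (R : realType) (n : nat).
Implicit Types (A B X M N : 'M[R]_n).

Lemma mpowS A j : mpow A j.+1 = A *m mpow A j.
Proof. by []. Qed.

Lemma mpow0 A : mpow A 0 = 1%:M.
Proof. by []. Qed.

Lemma mpowSr A j : mpow A j.+1 = mpow A j *m A.
Proof.
elim: j => [|j IH]; first by rewrite mpowS mpow0 mulmx1 mul1mx.
by rewrite mpowS {1}IH mulmxA.
Qed.

Lemma mpowD A i j : mpow A (i + j) = mpow A i *m mpow A j.
Proof.
elim: i => [|i IH]; first by rewrite add0n mpow0 mul1mx.
by rewrite addSn !mpowS IH mulmxA.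
Qed.

Lemma mpow_comm A X j : A *m X = X *m A -> mpow A j *m X = X *m mpow A j.
Proof.
move=> h; elim: j => [|j IH]; first by rewrite mpow0 mul1mx mulmx1.
by rewrite mpowS -mulmxA IH !mulmxA h.
Qed.

Lemma dpowE A B k : dpow (A, B) k =
  (mpow A k, \sum_(i < k) mpow A (k.-1 - i) *m B *m mpow A i).
Proof.
elim: k => [|k IH]; first by rewrite /dpow /= big_ord0.
rewrite [LHS]/dpow /= -/(dpow (A, B) k) IH /dmul /=.
congr pair; rewrite big_ord_recr /= subnn /mpow /= mul1mx -/(mpow A k).
congr (_ + _); rewrite mulmx_sumr; apply: eq_bigr => i _.
rewrite !mulmxA; congr (_ *m _ *m _).
have -> : (k - i = (k.-1 - i).+1)%N by case: i => i /= hi; lia.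
by [].
Qed.

Lemma mx_ext M N : (forall v : 'cV[R]_n, M *m v = N *m v) -> M = N.
Proof.
move=> h; apply/matrixP => i j.
have := congr1 (fun P : 'cV[R]_n => P i 0) (h (delta_mx j 0)).
by rewrite -!colE !mxE.
Qed.

Lemma exists_index A k : range_stable A k ->
  exists m, index_is A m /\ (m <= k)%N.
Proof.
have: forall Nn k, (k <= Nn)%N -> range_stable A k ->
  exists m, index_is A m /\ (m <= k)%N; last by move=> H; apply: (H k).
elim=> [|Nn IH] k0 hk hs.
  have k00 : k0 = 0%N by lia.
  subst k0; exists 0%N; split => //; split => // j; lia.
case: (classic (exists j, (j < k0)%N /\ range_stable A j)).
  move=> [j [hj hsj]]; have [m [hm hmj]] := IH j ltac:(lia) hsj.
  exists m; split => //; lia.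
move=> hno; exists k0; split => //; split => // j hj hsj; apply: hno; by exists j.
Qed.

Lemma drazin_at A X m k : range_stable A m -> (m <= k)%N ->
  mpow A k.+1 *m X = mpow A k -> A *m X = X *m A ->
  mpow A m.+1 *m X = mpow A m.
Proof.
move=> hs hmk hk hc.
have step : forall j (v : 'cV[R]_n), exists w, mpow A m *m v = mpow A (j + m) *m w.
  elim=> [|j IH] v; first by exists v.
  have [w hw] := IH v.
  have [w' hw'] := (hs (mpow A m *m w)).1 (ex_intro _ w erefl).
  exists w'; rewrite hw mpowD -mulmxA hw' mulmxA -mpowD.
  by rewrite addnS addSn.
apply: mx_ext => v.
have [w hw] := step (k - m)%N v.
rewrite subnK // in hw.
rewrite mpow_comm // -mulmxA [mpow A m.+1]/mpow /= -/(mpow A m).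
rewrite -mulmxA hw !mulmxA -mulmxA.
rewrite mulmxA -(mulmxA X A (mpow A k)) -mpowS -mpow_comm // hk.
by [].
Qed.

Lemma sum0_helper (a b c d : 'M[R]_n) : d = a + (b + c) -> a + b + (c - d) = 0.
Proof. by move=> ->; rewrite addrA addrA subrr. Qed.

End Aux.

Theorem mainTheorem1 (R : realType) (n k : nat) (A B X Rm : 'M[R]_n) :
  dual_index_is (A, B) k ->
  (is_DDGI (A, B) k (X, Rm) <->
   [/\ is_drazin A X,
       mpow A k *m X *m B + mpow A k *m Rm *m A
         + (\sum_(i < k) mpow A (k.-1 - i) *m B *m mpow A i) *m (X *m A - 1%:M)
         = 0,
       Rm = X *m A *m Rm + X *m B *m X + Rm *m A *m X &
       A *m Rm + B *m X = Rm *m A + X *m B]).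
Proof.
move=> [hds _].
have hrs : range_stable A k.
  move=> y; split.
    move=> [z ->].
    have [z' hz'] := (hds (dmulv (dpow (A, B) k) (z, 0))).1 (ex_intro _ _ erefl).
    exists z'.1; move/(congr1 fst): hz'; rewrite /dmulv /= !dpowE /=.
    by [].
  by move=> [z ->]; exists (A *m z); rewrite mpowSr mulmxA.
set S := \sum_(i < k) _.
rewrite /is_DDGI dpowE -/S /dmul /=.
split.
  move=> [E1 E2 E3].
  case: E1 => e1r e1d; case: E2 => e2r e2d; case: E3 => e3r e3d.
  have hk : mpow A k.+1 *m X = mpow A k.
    by rewrite mpowSr -mulmxA e3r mulmxA e1r.
  split.
  - have [m [hm hmk]] := exists_index hrs.
    exists m; split => //; split => //.
    exact: drazin_at (hm.1) hmk hk e3r.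
  - rewrite mulmxBr mulmx1; apply: sum0_helper; rewrite -{1}e1d mulmxDl !mulmxA.
    by [].
  - by rewrite -{1}e2d mulmxDl addrA.
  - by rewrite e3d addrC.
move=> [[m [hm [h1 h2 h3]]] d1 d2 d3].
have hmk : (m <= k)%N.
  case: (leqP m k) => // hkm; exfalso; exact: (hm.2 k hkm hrs).
have hk : mpow A k *m X *m A = mpow A k.
  rewrite -(subnK hmk) mpowD -!mulmxA -h3 (mulmxA (mpow A m)).
  by rewrite -mpowSr h1.
split.
- congr pair => //.
  apply/eqP; rewrite -subr_eq0; apply/eqP; rewrite -d1 mulmxBr mulmx1.
  by rewrite mulmxDl !mulmxA !addrA.
- congr pair => //.
  by rewrite mulmxDl addrA -d2.
- congr pair => //.
  by rewrite d3 addrC.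
Qed.
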